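(* Let $G$ be a completable graph and let $A(G),B(G)$ be $G$-partial matrices with $0<B(G)<A(G)$. Then $$\mathfrak{p}^+[A(G)-B(G)]=\big(\mathfrak{p}^+[A(G)]-\mathfrak{p}^+[B(G)]\big)\cap\mathbb{P},$$ where $\mathfrak{p}^+[A(G)]-\mathfrak{p}^+[B(G)]=\{M-N:M\in\mathfrak{p}^+[A(G)],N\in\mathfrak{p}^+[B(G)]\}$.
   Context: A graph $G=(V,E)$ is a finite undirected graph on $V=\{1,\dots,n\}$ containing all loops. A $G$-partial matrix has entries specified exactly for $\{i,j\}\in E$; a completion is an $n\times n$ matrix agreeing with it on $E$. Sums and differences of $G$-partial matrices are taken entrywise on $E$. A $G$-partial matrix $[a_{ij}]_G$ is partial positive definite if $a_{ji}=\overline{a_{ij}}$ on $E$ and every principal submatrix indexed by a clique of $G$ is positive definite. For $G$-partial Hermitian matrices, $C(G)>D(G)$ means $C(G)-D(G)$ is partial positive definite (so $0<B(G)$ means $B(G)$ is partial positive definite). $G$ is completable if every $G$-partial positive semidefinite matrix has a positive semidefinite completion (equivalently $G$ chordal). $\mathfrak{p}^+[\cdot]$ denotes the set of positive definite completions, and $\mathbb{P}$ the set of $n\times n$ positive definite matrices. *)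

(* Defs.v *)
From mathcomp Require Import all_boot all_order all_algebra.
Set Implicit Arguments. Unset Strict Implicit. Unset Printing Implicit Defensive.
Import Order.TTheory GRing.Theory Num.Theory.
Local Open Scope ring_scope.

(* Scalars: an arbitrary numClosedFieldType C (e.g. the complex numbers);
   the order on C is the partial order where 0 < z iff z is real positive. *)

Definition ctr (C : numClosedFieldType) m k (M : 'M[C]_(m, k)) : 'M[C]_(k, m) :=
  (map_mx Num.conj M)^T.

Definition hermitian (C : numClosedFieldType) k (M : 'M[C]_k) : Prop :=
  ctr M = M.

Definition posdef (C : numClosedFieldType) k (M : 'M[C]_k) : Prop :=
  hermitian M /\ forall x : 'cV[C]_k, x != 0 -> 0 < (ctr x *m M *m x) 0 0.

Definition possemidef (C : numClosedFieldType) k (M : 'M[C]_k) : Prop :=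
  hermitian M /\ forall x : 'cV[C]_k, 0 <= (ctr x *m M *m x) 0 0.

(* A graph on 'I_n is a relation e (assumed symmetric and reflexive).
   A G-partial matrix is represented by a function a : 'I_n -> 'I_n -> C of
   which only the entries a i j with e i j are meaningful; all notions below
   only inspect those entries. *)
Definition pmatrix (C : numClosedFieldType) (n : nat) := 'I_n -> 'I_n -> C.

Definition psub (C : numClosedFieldType) n (a b : pmatrix C n) : pmatrix C n :=
  fun i j => a i j - b i j.

Definition clique n (e : rel 'I_n) (S : {set 'I_n}) : Prop :=
  forall i j, i \in S -> j \in S -> e i j.

Definition prin_sub (C : numClosedFieldType) n (a : pmatrix C n) (S : {set 'I_n})
  : 'M[C]_#|S| := \matrix_(i < #|S|, j < #|S|) a (enum_val i) (enum_val j).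

Definition partial_pd (C : numClosedFieldType) n (e : rel 'I_n) (a : pmatrix C n)
  : Prop :=
  (forall i j, e i j -> a j i = Num.conj (a i j)) /\
  forall S : {set 'I_n}, clique e S -> posdef (prin_sub a S).

Definition partial_psd (C : numClosedFieldType) n (e : rel 'I_n) (a : pmatrix C n)
  : Prop :=
  (forall i j, e i j -> a j i = Num.conj (a i j)) /\
  forall S : {set 'I_n}, clique e S -> possemidef (prin_sub a S).

Definition completion (C : numClosedFieldType) n (e : rel 'I_n) (a : pmatrix C n)
  (M : 'M[C]_n) : Prop := forall i j, e i j -> M i j = a i j.

(* membership in p^+[a]: the positive definite completions of a *)
Definition pd_completion (C : numClosedFieldType) n (e : rel 'I_n) (a : pmatrix C n)
  (M : 'M[C]_n) : Prop := completion e a M /\ posdef M.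

Definition completable (C : numClosedFieldType) n (e : rel 'I_n) : Prop :=
  forall a : pmatrix C n, partial_psd e a ->
    exists M : 'M[C]_n, completion e a M /\ possemidef M.

(* Main.v *)
Require Import Defs.
From mathcomp Require Import all_boot all_order all_algebra.
From mathcomp Require Import sesquilinear spectral.
Import Defs.
Import GRing.Theory Order.Theory Num.Theory Num.Def.
Local Open Scope ring_scope.
Local Open Scope sesquilinear_scope.
Set Implicit Arguments. Unset Strict Implicit.

Section S.
Variable C : numClosedFieldType.

Lemma ctrE m k (M : 'M[C]_(m,k)) : ctr M = (M ^T) ^ Num.conj.
Proof. by apply/matrixP=> i j; rewrite !mxE. Qed.

Lemma ctr_mul m k l (A : 'M[C]_(m,k)) (B : 'M[C]_(k,l)) :
  ctr (A *m B) = ctr B *m ctr A.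
Proof. by rewrite /ctr map_mxM trmx_mul. Qed.

Lemma ctrK m k (A : 'M[C]_(m,k)) : ctr (ctr A) = A.
Proof. by apply/matrixP=> i j; rewrite !mxE conjCK. Qed.

Lemma ctrD m k (A B : 'M[C]_(m,k)) : ctr (A + B) = ctr A + ctr B.
Proof. by apply/matrixP=> i j; rewrite !mxE rmorphD. Qed.

Lemma ctrB m k (A B : 'M[C]_(m,k)) : ctr (A - B) = ctr A - ctr B.
Proof. by apply/matrixP=> i j; rewrite !mxE rmorphB. Qed.

Lemma ctr_scalar k (a : C) : a \is Num.real -> ctr (a%:M : 'M_k) = a%:M.
Proof.
move=> ar; apply/matrixP=> i j; rewrite !mxE eq_sym.
by case: (i == j); rewrite ?mulr1n ?mulr0n ?rmorph0 // conj_Creal.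
Qed.

Lemma herm_sym k (M : 'M[C]_k) : hermitian M -> M \is hermsymmx.
Proof.
rewrite /hermitian ctrE => H; apply/is_hermitianmxP.
by rewrite expr0 scale1r H.
Qed.

Lemma qform_dot k (x : 'cV[C]_k) : (ctr x *m x) 0 0 = \sum_i `|x i 0| ^+ 2.
Proof.
by rewrite mxE; apply: eq_bigr => i _; rewrite !mxE normCK mulrC.
Qed.

Lemma ctr_unit k (P : 'M[C]_k) : P \is unitarymx -> ctr P *m P = 1%:M.
Proof.
move=> uP; rewrite ctrE -invmx_unitary //; apply: mulVmx.
exact: unitarymx_unit.
Qed.

Lemma spec_eq k (K : 'M[C]_k) : hermitian K ->
  K = ctr (spectralmx K) *m diag_mx (spectral_diag K) *m spectralmx K.
Proof.
move=> /herm_sym /hermitian_normalmx /orthomx_spectralP E.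
by rewrite {1}E invmx_unitary ?spectral_unitarymx // ctrE.
Qed.

Lemma qform_spec k (K : 'M[C]_k) (x : 'cV[C]_k) : hermitian K ->
  (ctr x *m K *m x) 0 0 =
  \sum_i spectral_diag K 0 i * `|(spectralmx K *m x) i 0| ^+ 2.
Proof.
move=> hK; rewrite {1}(spec_eq hK) !mulmxA -ctr_mul.
set y := spectralmx K *m x; set d := spectral_diag K.
rewrite -mulmxA mxE; apply: eq_bigr => i _.
rewrite mxE (bigD1 i) //= big1 ?addr0; last first.
  by move=> j /negbTE ji; rewrite !mxE ji mulr0n mulr0.
by rewrite !mxE eqxx mulr1n normCK mulrAC mulrC [conjC _ * _]mulrC.
Qed.

Lemma eig_pos k (K : 'M[C]_k) i : posdef K -> 0 < spectral_diag K 0 i.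
Proof.
move=> [hK pK].
set P := spectralmx K.
have uP : P \is unitarymx by exact: spectral_unitarymx.
have Pu : P \in unitmx by exact: unitarymx_unit.
set x : 'cV[C]_k := invmx P *m delta_mx i 0.
have Px : P *m x = delta_mx i 0 by rewrite /x mulmxA mulmxV // mul1mx.
have xn0 : x != 0.
  apply/eqP=> x0; move: Px; rewrite x0 mulmx0 => /matrixP /(_ i 0).
  by rewrite !mxE !eqxx /= => /esym/eqP; rewrite oner_eq0.
have := pK x xn0; rewrite qform_spec // -/P Px (bigD1 i) //= big1 ?addr0.
  by rewrite mxE !eqxx /= normr1 expr1n mulr1.
by move=> j /negbTE ji; rewrite mxE ji /= normr0 expr0n /= mulr0.
Qed.

Lemma shift_psd k (K : 'M[C]_k) (eps : C) : hermitian K -> 0 <= eps ->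
  (forall i, eps <= spectral_diag K 0 i) -> possemidef (K - eps%:M).
Proof.
move=> hK e0 le; split.
  by rewrite /hermitian ctrB hK ctr_scalar // ger0_real.
move=> x.
have -> : ctr x *m (K - eps%:M) *m x = ctr x *m K *m x - eps *: (ctr x *m x).
  by rewrite mulmxBr mulmxBl mul_mx_scalar scalemxAl.
have h1 := qform_spec x hK.
have h2 : (ctr x *m x) 0 0 = \sum_i `|(spectralmx K *m x) i 0| ^+ 2.
  rewrite -qform_dot; congr (_ 0 0).
  by rewrite ctr_mul mulmxA -[ctr x *m _ *m _]mulmxA ctr_unit ?spectral_unitarymx // mulmx1.
move: (ctr x *m K *m x) (ctr x *m x) h1 h2 => Q R h1 h2.
rewrite !mxE h1 h2 mulr_sumr -sumrB sumr_ge0 // => i _.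
by rewrite -mulrBl mulr_ge0 ?subr_ge0 ?exprn_ge0.
Qed.

Lemma qformD k (M N : 'M[C]_k) (x : 'cV[C]_k) :
  (ctr x *m (M + N) *m x) 0 0 = (ctr x *m M *m x) 0 0 + (ctr x *m N *m x) 0 0.
Proof.
rewrite mulmxDr mulmxDl.
by move: (ctr x *m M *m x) (ctr x *m N *m x) => P Q; rewrite mxE.
Qed.

Lemma qform_scalar k (a : C) (x : 'cV[C]_k) :
  (ctr x *m a%:M *m x) 0 0 = a * (ctr x *m x) 0 0.
Proof.
rewrite mul_mx_scalar -scalemxAl.
by move: (ctr x *m x) => P; rewrite mxE.
Qed.

Lemma dot_pos k (x : 'cV[C]_k) : x != 0 -> 0 < (ctr x *m x) 0 0.
Proof.
move=> xn0; rewrite qform_dot lt_def sumr_ge0 ?andbT; last first.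
  by move=> i _; rewrite exprn_ge0.
apply/eqP=> /psumr_eq0P H; move/eqP: xn0; apply; apply/matrixP=> i j.
rewrite ord1 mxE; apply/eqP; rewrite -normr_eq0 -[_ == 0](expf_eq0 _ 2).
by rewrite H // => l _; rewrite exprn_ge0.
Qed.

Lemma posdefD k (M N : 'M[C]_k) : posdef M -> posdef N -> posdef (M + N).
Proof.
move=> [hM pM] [hN pN]; split; first by rewrite /hermitian ctrD hM hN.
by move=> x xn0; rewrite qformD addr_gt0 ?pM ?pN.
Qed.

Lemma psd_shift_pd k (N : 'M[C]_k) (eps : C) : possemidef N -> 0 < eps ->
  posdef (N + eps%:M).
Proof.
move=> [hN pN] e0; split.
  by rewrite /hermitian ctrD hN ctr_scalar // gtr0_real.
by move=> x xn0; rewrite qformD qform_scalar ltr_wpDl ?pN // mulr_gt0 ?dot_pos.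
Qed.
End S.

Lemma pd_completion_exists (C : numClosedFieldType) (n : nat) (e : rel 'I_n)
  (e_refl : reflexive e) (e_compl : completable C e) (B : pmatrix C n)
  (hB : partial_pd e B) : exists Q, pd_completion e B Q.
Proof.
pose cliqueb (S : {set 'I_n}) := [forall i in S, forall j in S, e i j].
have clb S : clique e S -> cliqueb S.
  move=> cS; apply/forall_inP => i iS; apply/forall_inP => j jS; exact: cS.
pose d (S : {set 'I_n}) i := spectral_diag (prin_sub B S) 0 i.
have dpos S i : clique e S -> 0 < d S i.
  by move=> cS; apply: eig_pos; exact: hB.2 S cS.
have cbl S : cliqueb S -> clique e S.
  by move=> /forall_inP cS i j iS jS; have /forall_inP := cS i iS; apply.
pose tot := \sum_(S | cliqueb S) \sum_i (d S i)^-1.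
have tot0 : 0 <= tot.
  apply: sumr_ge0 => S /cbl cS; apply: sumr_ge0 => i _.
  by rewrite invr_ge0 ltW // dpos.
pose eps := (1 + tot)^-1.
have e0 : 0 < eps by rewrite invr_gt0 ltr_wpDr.
have le S i : clique e S -> eps <= d S i.
  move=> cS; rewrite -[d S i]invrK lef_pV2 ?posrE ?invr_gt0 ?dpos //; last by rewrite ltr_wpDr.
  rewrite -[(d S i)^-1]add0r; apply: lerD => //.
  rewrite /tot (bigD1 S) ?clb //= (bigD1 i) //=.
  rewrite -addrA lerDl addr_ge0 ?sumr_ge0 //.
    by move=> j _; rewrite invr_ge0 ltW // dpos.
  move=> T /andP[/cbl cT _]; apply: sumr_ge0 => j _.
  by rewrite invr_ge0 ltW // dpos.
pose Be : pmatrix C n := fun i j => B i j - (i == j)%:R * eps.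
have eR : eps \is Num.real by rewrite gtr0_real.
have hBe : partial_psd e Be.
  split.
    move=> i j eij; rewrite /Be (hB.1 i j eij) eq_sym rmorphB rmorphM rmorph_nat.
    by congr (_ - _ * _); exact: (esym (conj_Creal eR)).
  move=> S cS.
  have -> : prin_sub Be S = prin_sub B S - eps%:M.
    apply/matrixP=> a b; rewrite !mxE /Be (inj_eq enum_val_inj).
    by rewrite mulr_natl.
  apply: shift_psd; first exact: (hB.2 S cS).1.
    exact: ltW.
  by move=> i; apply: le.
have [N [cN pN]] := e_compl Be hBe.
exists (N + eps%:M); split; last exact: psd_shift_pd.
move=> i j eij; rewrite !mxE cN // /Be mulr_natl; case: (i == j) => /=.
  by rewrite mulr1n subrK.
by rewrite mulr0n subr0 addr0.
Qed.

Theorem theorem5p5 (C : numClosedFieldType) (n : nat) (e : rel 'I_n)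
  (e_refl : reflexive e) (e_sym : symmetric e)
  (e_compl : completable C e) (A B : pmatrix C n)
  (hB : partial_pd e B) (hAB : partial_pd e (psub A B)) :
  forall M : 'M[C]_n,
    pd_completion e (psub A B) M <->
    ((exists P Q : 'M[C]_n,
        pd_completion e A P /\ pd_completion e B Q /\ M = P - Q)
     /\ posdef M).
Proof.
move=> M; split.
  move=> [cM pM]; split=> //.
  have [Q [cQ pQ]] := pd_completion_exists e_refl e_compl hB.
  exists (M + Q), Q; split; last by split=> //; rewrite addrK.
  split; last exact: posdefD.
  by move=> i j eij; rewrite mxE cM // cQ // /psub subrK.
move=> [[P [Q [[cP _] [[cQ _] ->]]]] pM]; split=> //.
by move=> i j eij; rewrite !mxE cP // cQ.
Qed.
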